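(* For a nonempty partition $\lambda$, define the weight $\omega(\lambda)=1+4\sum_j(-1)^j$, where the sum is over those $j$ in the initial run of $\lambda$ that occur an odd number of times as a part of $\lambda$. Then for every positive integer $n$, $$M_e(n)-M_o(n)=\sum_{\lambda}\omega(\lambda),$$ the sum being over all partitions $\lambda$ of $n$.
   Context: The initial run of a partition $\lambda$ is the set $\{1,2,\dots,r\}$ where $r\ge 0$ is the largest integer such that each of $1,2,\dots,r$ occurs as a part of $\lambda$ (empty if $1$ is not a part). For example $(7,7,5,3,3,3,3,2,1,1)$ has initial run $\{1,2,3\}$. For $|q|<1$ write $(z;q)_\infty=\prod_{j\geq 0}(1-zq^j)$; $M_e(n)-M_o(n)$ (even-crank minus odd-crank partitions of $n$, Andrews–Garvan crank) is defined by $\sum_{n\geq 0}(M_e(n)-M_o(n))q^n=\frac{(q;q)_\infty}{(-q;q)_\infty^2}$. *)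

(* Defs.v *)
From mathcomp Require Import all_boot all_order all_algebra.
Set Implicit Arguments. Unset Strict Implicit. Unset Printing Implicit Defensive.
Import GRing.Theory Num.Theory.
Local Open Scope ring_scope.

(* A partition of n is encoded by its multiplicity function:
   m : {ffun 'I_n -> 'I_n.+1}, where (m i) is the number of times the part
   (i+1) occurs.  Every part of a partition of n lies in {1..n} and each
   multiplicity is <= n, so this is a bijective encoding of partitions of n. *)
Definition is_partition (n : nat) (m : {ffun 'I_n -> 'I_n.+1}) : bool :=
  (\sum_(i < n) i.+1 * m i)%N == n.

Definition occurs (n : nat) (m : {ffun 'I_n -> 'I_n.+1}) (i : 'I_n) : bool :=
  (0 < m i)%N.

Definition in_initial_run (n : nat) (m : {ffun 'I_n -> 'I_n.+1}) (i : 'I_n)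
  : bool := [forall k : 'I_n, (k <= i)%N ==> occurs m k].

Definition omega (n : nat) (m : {ffun 'I_n -> 'I_n.+1}) : int :=
  1 + 4 * \sum_(i < n | in_initial_run m i && odd (m i)) (-1) ^+ i.+1.

(* Coefficient of q^n in (q;q)_oo / (-q;q)_oo^2.  Modulo q^(n+1) only the
   factors j = 1..n matter, and 1/(1+q^j)^2 = sum_k (-1)^k (k+1) q^(jk),
   of which only the terms with k <= n matter. *)
Definition crank_gf_trunc (n : nat) : {poly int} :=
  \prod_(1 <= j < n.+1)
     ((1 - 'X^j) * \sum_(k < n.+1) (((-1) ^+ k * k.+1%:R) *: 'X^(j * k))).

Definition MeMo (n : nat) : int := (crank_gf_trunc n)`_n.

(* Main.v *)
Require Import Defs.
From mathcomp Require Import all_boot all_order all_algebra.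
From mathcomp Require Import ring zify.
Set Implicit Arguments. Unset Strict Implicit. Unset Printing Implicit Defensive.
Import GRing.Theory.
Local Open Scope ring_scope.

Definition eqm (M : nat) (p q : {poly int}) := exists r : {poly int}, p - q = r * 'X^M.


Lemma eqm_refl (M : nat) p : eqm M p p.
Proof. by exists 0; rewrite subrr mul0r. Qed.

Lemma eqm_sym (M : nat) p q : eqm M p q -> eqm M q p.
Proof. by case=> r h; exists (- r); rewrite mulNr -h opprB. Qed.

Lemma eqm_trans (M : nat) p q s : eqm M p q -> eqm M q s -> eqm M p s.
Proof.
case=> r1 h1 [r2 h2]; exists (r1 + r2).
by rewrite mulrDl -h1 -h2 addrA subrK.
Qed.

Lemma eqmD (M : nat) p1 q1 p2 q2 : eqm M p1 q1 -> eqm M p2 q2 -> eqm M (p1 + p2) (q1 + q2).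
Proof.
case=> r1 h1 [r2 h2]; exists (r1 + r2).
rewrite mulrDl -h1 -h2; ring.
Qed.

Lemma eqmN (M : nat) p q : eqm M p q -> eqm M (- p) (- q).
Proof. by case=> r h; exists (- r); rewrite mulNr -h opprB opprK addrC. Qed.

Lemma eqmB (M : nat) p1 q1 p2 q2 : eqm M p1 q1 -> eqm M p2 q2 -> eqm M (p1 - p2) (q1 - q2).
Proof. by move=> h1 h2; apply: eqmD h1 (eqmN h2). Qed.

Lemma eqmM (M : nat) p1 q1 p2 q2 : eqm M p1 q1 -> eqm M p2 q2 -> eqm M (p1 * p2) (q1 * q2).
Proof.
case=> r1 h1 [r2 h2]; exists (r1 * p2 + q1 * r2).
have -> : p1 * p2 - q1 * q2 = (p1 - q1) * p2 + q1 * (p2 - q2) by ring.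
rewrite h1 h2; ring.
Qed.

Lemma eqmMl (M : nat) c p q : eqm M p q -> eqm M (c * p) (c * q).
Proof. by apply: eqmM (eqm_refl _ _). Qed.

Lemma eqmMr (M : nat) c p q : eqm M p q -> eqm M (p * c) (q * c).
Proof. by move=> h; apply: eqmM h (eqm_refl _ _). Qed.

Lemma eqm_eq (M : nat) p q : p = q -> eqm M p q.
Proof. by move->; apply: eqm_refl. Qed.

Lemma eqmX0 (M : nat) a : (M <= a)%N -> eqm M 'X^a 0.
Proof.
by move=> h; exists 'X^(a - M); rewrite subr0 -exprD subnK.
Qed.

Lemma eqm_coef (M : nat) p q i : eqm M p q -> (i < M)%N -> p`_i = q`_i.
Proof.
case=> r h hi; apply/eqP; rewrite -subr_eq0 -coefB h coefMXn hi //.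
Qed.

Lemma eqm_sum (M : nat) (I : Type) (r : seq I) (P : pred I) (F1 F2 : I -> {poly int}) :
  (forall i, P i -> eqm M (F1 i) (F2 i)) ->
  eqm M (\sum_(i <- r | P i) F1 i) (\sum_(i <- r | P i) F2 i).
Proof.
move=> h; apply: (big_ind2 (fun a b => eqm M a b)) => //.
- exact: eqm_refl.
- by move=> ? ? ? ?; apply: eqmD.
Qed.

Lemma eqm_prod (M : nat) (I : Type) (r : seq I) (P : pred I) (F1 F2 : I -> {poly int}) :
  (forall i, P i -> eqm M (F1 i) (F2 i)) ->
  eqm M (\prod_(i <- r | P i) F1 i) (\prod_(i <- r | P i) F2 i).
Proof.
move=> h; apply: (big_ind2 (fun a b => eqm M a b)) => //.
- exact: eqm_refl.
- by move=> ? ? ? ?; apply: eqmM.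
Qed.

Definition unitX (u : {poly int}) := exists s : {poly int}, u = 1 + 'X * s.

Lemma unitXM u v : unitX u -> unitX v -> unitX (u * v).
Proof. by case=> s -> [t ->]; exists (s + t + 'X * s * t); ring. Qed.

Lemma unitX_prod (I : Type) (r : seq I) (P : pred I) (F : I -> {poly int}) :
  (forall i, P i -> unitX (F i)) -> unitX (\prod_(i <- r | P i) F i).
Proof.
move=> h; apply: (big_ind (fun a => unitX a)) => //.
- by exists 0; rewrite mulr0 addr0.
- by move=> ? ?; apply: unitXM.
Qed.

Lemma unitXp k : unitX (1 + 'X^(k.+1)).
Proof. by rewrite /unitX; exists ('X^k : {poly int}); rewrite exprS. Qed.

Lemma unitXm k : unitX (1 - 'X^(k.+1)).
Proof. by rewrite /unitX; exists (- 'X^k : {poly int}); rewrite exprS; ring. Qed.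

Lemma unitX_inv (M : nat) u : unitX u -> exists v, eqm M (v * u) 1.
Proof.
case=> s ->; exists (\sum_(t < M) (- ('X * s)) ^+ t).
exists (- ((- s) ^+ M)).
have e : forall n, (\sum_(t < n) (- ('X * s)) ^+ t) * (1 + 'X * s) - 1
                   = - (- ('X * s)) ^+ n.
  elim=> [|n IH]; first by rewrite big_ord0 expr0; ring.
  rewrite big_ord_recr /=.
  set S := \sum_(i < n) _ in IH *.
  have -> : (S + (- ('X * s)) ^+ n) * (1 + 'X * s) - 1 =
    (S * (1 + 'X * s) - 1) + (- ('X * s)) ^+ n * (1 + 'X * s) by ring.
  by rewrite IH exprS; ring.
rewrite e.
have -> : - ('X * s) = (- s) * 'X by ring.
by rewrite exprMn; ring.
Qed.

Lemma eqm_cancel (M : nat) u p q : unitX u -> eqm M (u * p) (u * q) -> eqm M p q.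
Proof.
move=> /(unitX_inv M) [v hv] h.
have h1 := eqmMl v h.
apply: (eqm_trans (q := v * (u * p))).
  apply: eqm_sym; rewrite mulrA; apply: eqm_trans (eqmMr p hv) _.
  rewrite mul1r; exact: eqm_refl.
apply: eqm_trans h1 _; rewrite mulrA; apply: eqm_trans (eqmMr q hv) _.
rewrite mul1r; exact: eqm_refl.
Qed.


Definition D n : {poly int} := \prod_(i < n) (1 - 'X^(i.+1)).
Definition E n : {poly int} := \prod_(i < n) (1 + 'X^(i.+1)).
Definition Eh n (k : nat) : {poly int} := \prod_(i < n | (i : nat) != k) (1 + 'X^(i.+1)).

Lemma D0 : D 0 = 1. Proof. by rewrite /D big_ord0. Qed.
Lemma DS n : D n.+1 = D n * (1 - 'X^(n.+1)). Proof. by rewrite /D big_ord_recr. Qed.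
Lemma ES n : E n.+1 = E n * (1 + 'X^(n.+1)). Proof. by rewrite /E big_ord_recr. Qed.

Lemma EhS n k : k != n -> Eh n.+1 k = Eh n k * (1 + 'X^(n.+1)).
Proof.
move=> hk; rewrite /Eh big_mkcond big_ord_recr /= eq_sym hk -big_mkcond //.
Qed.

Lemma Eh_self n : Eh n n = E n.
Proof. by apply: eq_bigl => i; rewrite neq_ltn ltn_ord. Qed.

Lemma EhE n k : (k < n)%N -> (1 + 'X^(k.+1)) * Eh n k = E n.
Proof.
move=> hk; rewrite /E (bigD1 (Ordinal hk)) //=; congr (_ * _).
Qed.

Lemma unitX_neq0 u : unitX u -> u != 0.
Proof.
case=> s ->; apply/eqP => /(congr1 (fun p : {poly int} => p`_0)).
by rewrite coefD coef1 coefXM /= coef0 addr0.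
Qed.

Lemma unitX_D n : unitX (D n).
Proof. by apply: unitX_prod => i _; apply: unitXm. Qed.
Lemma unitX_E n : unitX (E n).
Proof. by apply: unitX_prod => i _; apply: unitXp. Qed.
Lemma D_neq0 n : D n != 0.
Proof. exact: unitX_neq0 (unitX_D n). Qed.

Lemma D_add b k : D (b + k) = D b * \prod_(i < k) (1 - 'X^((b + i).+1)).
Proof.
elim: k => [|k IH]; first by rewrite addn0 big_ord0 mulr1.
by rewrite addnS DS IH big_ord_recr /= mulrA.
Qed.

Fixpoint G (N j : nat) {struct N} : {poly int} :=
  match N with
  | 0 => if j == 0%N then 1 else 0
  | N'.+1 => match j with 0 => 1 | j'.+1 => G N' j' + 'X^(j'.+1) * G N' j'.+1 end
  end.

Lemma G_N0 N : G N 0 = 1. Proof. by case: N. Qed.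

Lemma G_gt N j : (N < j)%N -> G N j = 0.
Proof.
elim: N j => [|N IH] [|j] //= h.
by rewrite !IH ?mulr0 ?addr0 //; lia.
Qed.

Lemma G_prod N j : (j <= N)%N -> G N j * D j * D (N - j) = D N.
Proof.
elim: N j => [|N IH] [|j] //= h.
- by rewrite D0 !mul1r.
- by rewrite D0 subn0 !mul1r.
rewrite subSS mulrDl mulrDl DS.
have t1 : G N j * (D j * (1 - 'X^(j.+1))) * D (N - j) = D N * (1 - 'X^(j.+1)).
  by rewrite -(IH j) //; ring.
rewrite t1.
have [hj|hj|hj] := ltngtP j N; [|by exfalso; lia|]; last first.
  by subst j; rewrite (G_gt (ltnSn N)) subnn D0 DS; ring.
have e : (N - j = (N - j.+1).+1)%N by lia.
  rewrite e DS.
  have t2 : 'X^(j.+1) * G N j.+1 * (D j * (1 - 'X^(j.+1))) *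
     (D (N - j.+1) * (1 - 'X^((N - j.+1).+1)))
     = 'X^(j.+1) * (1 - 'X^((N - j.+1).+1)) * (G N j.+1 * D j.+1 * D (N - j.+1)).
    by rewrite DS; ring.
  rewrite t2 IH // DS.
  have -> : 'X^(N.+1) = 'X^(j.+1) * 'X^((N - j.+1).+1) :> {poly int}.
    by rewrite -exprD; congr (_ ^+ _); lia.
  ring.
Qed.

Lemma G_sym N j : (j <= N)%N -> G N j = G N (N - j).
Proof.
move=> h; apply: (mulIf (D_neq0 j)); apply: (mulIf (D_neq0 (N - j))).
rewrite G_prod //.
have h2 : (N - j <= N)%N by rewrite leq_subr.
rewrite -{1}(G_prod h2) subKn //; ring.
Qed.

Lemma G_shift N a : (a <= N)%N ->
  G N.+2 a.+1 * (1 - 'X^(a.+1)) * (1 - 'X^(N.+1 - a)) =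
  G N a * (1 - 'X^(N.+1)) * (1 - 'X^(N.+2)).
Proof.
move=> h; apply: (mulIf (D_neq0 a)); apply: (mulIf (D_neq0 (N - a))).
have e1 : G N.+2 a.+1 * D a.+1 * D (N.+2 - a.+1) = D N.+2 by apply: G_prod; lia.
have e2 := G_prod h.
have e3 : (N.+2 - a.+1 = (N - a).+1)%N by lia.
have e4 : (N.+1 - a = (N - a).+1)%N by lia.
rewrite e3 !DS in e1; rewrite e4.
rewrite -e2 in e1.
transitivity (G N.+2 a.+1 * (D a * (1 - 'X^(a.+1))) * (D (N - a) * (1 - 'X^((N - a).+1)))).
  ring.
rewrite e1; ring.
Qed.

Definition ee (j r : nat) : nat := ('C(j - r, 2) + 'C((r - j).+1, 2))%N.

Lemma binS2 n : 'C(n.+1, 2) = ('C(n, 2) + n)%N.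
Proof. by rewrite binS bin1. Qed.

Lemma ee_SS j r : ee j.+1 r.+1 = ee j r.
Proof. by rewrite /ee !subSS. Qed.

Lemma ee_S j r : (ee j.+1 r + r = ee j r + j)%N.
Proof.
rewrite /ee; case: (leqP r j) => h.
- have -> : (j.+1 - r = (j - r).+1)%N by lia.
  have -> : (r - j.+1 = 0)%N by lia.
  have -> : (r - j = 0)%N by lia.
  rewrite binS2; lia.
- have -> : (j.+1 - r = 0)%N by lia.
  have -> : (j - r = 0)%N by lia.
  have -> : ((r - j.+1).+1 = r - j)%N by lia.
  have -> : (r - j = (r - j.+1).+1)%N by lia.
  rewrite (binS2 (r - j.+1).+1); lia.
Qed.

Lemma sum_recl (F : nat -> {poly int}) n :
  \sum_(i < n.+1) F i = F 0%N + \sum_(i < n) F i.+1.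
Proof. by rewrite big_ord_recl. Qed.

Lemma sum_recr (F : nat -> {poly int}) n :
  \sum_(i < n.+1) F i = \sum_(i < n) F i + F n.
Proof. by rewrite big_ord_recr. Qed.

Definition S N r : {poly int} := \sum_(j < N.+1) (-1) ^+ j * 'X^(ee j r) * G N j.

Lemma S_rec N r :
  S N.+1 r = ('X^r - 1) * \sum_(j < N.+1) (-1) ^+ j * 'X^(ee j.+1 r) * G N j.
Proof.
set A := \sum_(j < N.+1) _.
have t : forall j : nat, (-1) ^+ j * 'X^(ee j r) * 'X^j * G N j =
    'X^r * ((-1) ^+ j * 'X^(ee j.+1 r) * G N j).
  move=> j.
  have e : 'X^(ee j r) * 'X^j = 'X^(ee j.+1 r) * 'X^r :> {poly int}.
    by rewrite -!exprD ee_S.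
  transitivity ((-1) ^+ j * ('X^(ee j r) * 'X^j) * G N j); first ring.
  rewrite e; ring.
have c1 : \sum_(j < N.+2) (-1) ^+ j * 'X^(ee j r) * 'X^j * G N j = 'X^r * A.
  rewrite big_ord_recr /= (G_gt (ltnSn N)) mulr0 addr0 /A mulr_sumr.
  apply: eq_bigr => j _; exact: t.
have c2 : S N.+1 r = \sum_(j < N.+2) (-1) ^+ j * 'X^(ee j r) * 'X^j * G N j - A.
  rewrite /S (sum_recl (fun j => (-1) ^+ j * 'X^(ee j r) * G N.+1 j)).
  rewrite (sum_recl (fun j => (-1) ^+ j * 'X^(ee j r) * 'X^j * G N j)) /= G_N0 expr0 !mulr1.
  have -> : \sum_(i < N.+1) (-1) ^+ i.+1 * 'X^(ee i.+1 r) * G N.+1 i.+1 =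
    \sum_(i < N.+1) (-1) ^+ i.+1 * 'X^(ee i.+1 r) * 'X^(i.+1) * G N i.+1 - A.
    rewrite /A -sumrB; apply: eq_bigr => i _ /=.
    rewrite !exprS; ring.
  ring.
rewrite c2 c1; ring.
Qed.

Lemma S_van r N : (r < N)%N -> S N r = 0.
Proof.
elim: r N => [|r IH] [|N] // h.
- by rewrite S_rec expr0 subrr mul0r.
- rewrite S_rec.
  have -> : \sum_(j < N.+1) (-1) ^+ j * 'X^(ee j.+1 r.+1) * G N j = S N r.
    by apply: eq_bigr => j _; rewrite ee_SS.
  by rewrite IH ?mulr0.
Qed.

Definition fk (k : nat) : {poly int} :=
  'X^('C(k.-1, 2)) * (1 - 'X^k) * (1 - 'X^(k + k)).
Definition Fj m j : {poly int} :=
  'X^(ee j m.+1) - 'X^((ee j m).+1) - 'X^((ee j m.-1).+1) + 'X^(ee j (m - 2)).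

Lemma C02 : 'C(0, 2) = 0%N. Proof. by []. Qed.
Lemma C12 : 'C(1, 2) = 0%N. Proof. by []. Qed.
Lemma C22 : 'C(2, 2) = 1%N. Proof. by []. Qed.

Lemma F_alg (a K e1 e2 e3 e4 : nat) :
  e1 = (a + (K + K + K))%N -> e2 = (a + (K + K))%N -> e3 = (a + K)%N -> e4 = a ->
  'X^e1 - 'X^e2 - 'X^e3 + 'X^e4 = 'X^a * (1 - 'X^K) * (1 - 'X^(K + K)) :> {poly int}.
Proof. by move=> -> -> -> ->; rewrite !exprD; ring. Qed.

Lemma F_alg2 (a K e1 e2 e3 e4 : nat) :
  e1 = a -> e2 = (a + K)%N -> e3 = (a + (K + K))%N -> e4 = (a + (K + K + K))%N ->
  'X^e1 - 'X^e2 - 'X^e3 + 'X^e4 = 'X^a * (1 - 'X^K) * (1 - 'X^(K + K)) :> {poly int}.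
Proof. by move=> -> -> -> ->; rewrite !exprD; ring. Qed.

Lemma F_hi m k : (2 <= m)%N -> Fj m (m + k) = fk k.
Proof.
move=> hm; rewrite /Fj /fk /ee.
case: k => [|k].
  rewrite addn0.
  have -> : (m - m.+1 = 0)%N by lia.
  have -> : (m.+1 - m = 1)%N by lia.
  have -> : (m - m = 0)%N by lia.
  have -> : (m - m.-1 = 1)%N by lia.
  have -> : (m.-1 - m = 0)%N by lia.
  have -> : (m - (m - 2) = 2)%N by lia.
  have -> : (m - 2 - m = 0)%N by lia.
  rewrite C02 C12 C22 /= expr0 subrr; ring.
have -> : (m + k.+1 - m.+1 = k)%N by lia.
have -> : (m.+1 - (m + k.+1) = 0)%N by lia.
have -> : (m + k.+1 - m = k.+1)%N by lia.
have -> : (m - (m + k.+1) = 0)%N by lia.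
have -> : (m + k.+1 - m.-1 = k.+2)%N by lia.
have -> : (m.-1 - (m + k.+1) = 0)%N by lia.
have -> : (m + k.+1 - (m - 2) = k.+3)%N by lia.
have -> : (m - 2 - (m + k.+1) = 0)%N by lia.
apply: F_alg2; rewrite /= ?C12 ?addn0 ?binS2; lia.
Qed.

Lemma F_lo m k : (2 <= m)%N -> (k < m)%N -> Fj m (m - k.+1) = fk k.+1.
Proof.
move=> hm hk; rewrite /Fj /fk /ee.
have -> : (m - k.+1 - m.+1 = 0)%N by lia.
have -> : (m.+1 - (m - k.+1) = k.+2)%N by lia.
have -> : (m - k.+1 - m = 0)%N by lia.
have -> : (m - (m - k.+1) = k.+1)%N by lia.
have -> : (m - k.+1 - m.-1 = 0)%N by lia.
have -> : (m.-1 - (m - k.+1) = k)%N by lia.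
have e4 : ('C(m - k.+1 - (m - 2), 2) + 'C((m - 2 - (m - k.+1)).+1, 2))%N = 'C(k, 2).
  case: k hk => [|k] hk.
    have -> : (m - 1 - (m - 2) = 1)%N by lia.
    have -> : (m - 2 - (m - 1) = 0)%N by lia.
    by [].
  have -> : (m - k.+2 - (m - 2) = 0)%N by lia.
  have -> : ((m - 2 - (m - k.+2)).+1 = k.+1)%N by lia.
  by rewrite C02.
rewrite e4.
apply: F_alg; rewrite /= ?C02 ?add0n ?binS2; lia.
Qed.

Lemma sgn2 (a b : nat) : (-1) ^+ (a + (b + b)) = (-1) ^+ a :> {poly int}.
Proof.
elim: b => [|b IH]; first by rewrite !addn0.
have -> : (a + (b.+1 + b.+1) = (a + (b + b)).+2)%N by lia.
by rewrite !exprS IH; ring.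
Qed.

Lemma Lp_zero m : (2 <= m)%N ->
  \sum_(i < m) (-1) ^+ i * fk i.+1 * G (m + m) (m - i.+1) = 0.
Proof.
move=> hm.
set L := \sum_(i < m) _.
have full : \sum_(j < (m + m).+1) (-1) ^+ j * Fj m j * G (m + m) j = 0.
  transitivity (S (m + m) m.+1 - 'X * S (m + m) m - 'X * S (m + m) m.-1
                + S (m + m) (m - 2)).
    rewrite /S !mulr_sumr -!sumrB -big_split /=; apply: eq_bigr => j _.
    rewrite /Fj !exprS; ring.
  rewrite !S_van; try lia.
  ring.
rewrite -addnS big_split_ord /= in full.
rewrite (sum_recl (fun j => (-1) ^+ (m + j) * Fj m (m + j) * G (m + m) (m + j))) in full.
rewrite addn0 in full.
have fm : Fj m m = 0 by rewrite -{2}(addn0 m) F_hi // /fk expr0 subrr; ring.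
rewrite fm mulr0 mul0r add0r in full.
rewrite (reindex_inj rev_ord_inj) /= in full.
rewrite -big_split /= in full.
have : L * (2%:R * (-1) ^+ m.+1) = 0.
  rewrite -full /L mulr_suml; apply: eq_bigr => i _.
  have hi := ltn_ord i.
  rewrite F_lo // F_hi // (@G_sym (m + m) (m + i.+1)); last lia.
  have -> : (m + m - (m + i.+1) = m - i.+1)%N by lia.
  have s1 : (-1) ^+ (m - i.+1) = (-1) ^+ m.+1 * (-1) ^+ i :> {poly int}.
    rewrite -exprD -(sgn2 (m - i.+1) i.+1); congr (_ ^+ _); lia.
  have s2 : (-1) ^+ (m + i.+1) = (-1) ^+ m.+1 * (-1) ^+ i :> {poly int}.
    rewrite -exprD; congr (_ ^+ _); lia.
  rewrite s1 s2; ring.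
move/eqP; rewrite mulf_eq0 => /orP [/eqP //|].
rewrite mulf_eq0 signr_eq0 orbF => h; exfalso; move: h.
apply/negP; apply/eqP => /(congr1 (fun p : {poly int} => p`_0)).
by rewrite coefMn coef1 coef0 /= => /eqP; rewrite Num.Theory.mulrn_eq0.
Qed.

Definition cc (i : nat) : {poly int} :=
  (-1) ^+ i * 'X^('C(i.+1, 2)) * (1 - 'X^(i.+1)) ^+ 2.

Definition Phi n : {poly int} :=
  \sum_(i < n) cc i * Eh n i * E n * G (n + n) (n - i.+1).

Lemma Eh_last n : Eh n.+1 n = E n.
Proof.
rewrite /Eh big_mkcond big_ord_recr /= eqxx mulr1 /E.
by apply: eq_bigr => i _; rewrite neq_ltn ltn_ord.
Qed.

Lemma D_step n : D (n.+1 + n.+1) = D (n + n) * ((1 - 'X^((n + n).+1)) * (1 - 'X^((n + n).+2))).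
Proof. by rewrite addSn addnS !DS mulrA. Qed.

Lemma Phi_step n : (1 <= n)%N ->
  Phi n.+1 = Phi n * ((1 - 'X^((n + n).+1)) * (1 - 'X^((n + n).+2))).
Proof.
move=> hn.
have hL := @Lp_zero n.+1 (ltac:(lia)).
rewrite (sum_recr (fun i => (-1) ^+ i * fk i.+1 * G (n.+1 + n.+1) (n.+1 - i.+1))) in hL.
rewrite /Phi (sum_recr (fun i => cc i * Eh n.+1 i * E n.+1 * G (n.+1 + n.+1) (n.+1 - i.+1))).
rewrite mulr_suml.
set P := (1 - 'X^((n + n).+1)) * (1 - 'X^((n + n).+2)).
transitivity (\sum_(i < n) (cc i * Eh n i * E n * G (n + n) (n - i.+1) * P +
     E n ^+ 2 * 'X^n * ((-1) ^+ i * fk i.+1 * G (n.+1 + n.+1) (n.+1 - i.+1)))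
   + E n ^+ 2 * 'X^n * ((-1) ^+ n * fk n.+1 * G (n.+1 + n.+1) (n.+1 - n.+1))).
  congr (_ + _).
    apply: eq_bigr => i _.
    have hi := ltn_ord i.
    have gs := @G_shift (n + n) (n - i.+1) (ltac:(lia)).
    have eN : (n.+1 + n.+1 = (n + n).+2)%N by lia.
    have eA : (n.+1 - i.+1 = (n - i.+1).+1)%N by lia.
    rewrite eN eA.
    set g := G (n + n).+2 (n - i.+1).+1.
    transitivity (cc i * Eh n i * E n * (g * (1 - 'X^((n - i.+1).+1)) *
         (1 - 'X^((n + n).+1 - (n - i.+1)))) +
         E n ^+ 2 * 'X^n * ((-1) ^+ i * fk i.+1 * g)); last first.
      by rewrite /g gs /P; ring.
    have hin : (i : nat) != n by rewrite neq_ltn hi.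
    rewrite (EhS hin) ES -(EhE hi).
    have x1 : 'X^(n.+1) = 'X^(n - i) * 'X^(i.+1) :> {poly int}.
      by rewrite -exprD; congr (_ ^+ _); lia.
    have x2 : 'X^((n - i.+1).+1) = 'X^(n - i) :> {poly int}.
      by congr (_ ^+ _); lia.
    have x3 : 'X^((n + n).+1 - (n - i.+1)) = 'X^(n - i) * 'X^(i.+1) * 'X^(i.+1) :> {poly int}.
      by rewrite -!exprD; congr (_ ^+ _); lia.
    have x4 : 'X^n = 'X^(n - i) * 'X^i :> {poly int}.
      by rewrite -exprD; congr (_ ^+ _); lia.
    have x5 : 'X^('C(i.+1, 2)) = 'X^('C(i, 2)) * 'X^i :> {poly int}.
      by rewrite -exprD binS2.
    have x6 : 'X^(i.+1 + i.+1) = 'X^(i.+1) * 'X^(i.+1) :> {poly int}.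
      by rewrite -exprD.
    rewrite /cc /fk /= x1 x2 x3 x4 x5 x6; ring.
  rewrite Eh_last ES /cc /fk /= subnn.
  have x5 : 'X^('C(n.+1, 2)) = 'X^('C(n, 2)) * 'X^n :> {poly int}.
    by rewrite -exprD binS2.
  have x6 : 'X^(n.+1 + n.+1) = 'X^(n.+1) * 'X^(n.+1) :> {poly int}.
    by rewrite -exprD.
  rewrite x5 x6; ring.
rewrite big_split /= -mulr_sumr -mulr_suml -addrA -mulrDr hL mulr0 addr0.
by [].
Qed.

Lemma Phi1 : Phi 1 = D 2.
Proof.
rewrite /Phi big_ord1 /= /Eh /E /cc big_ord1 /=.
rewrite big_mkcond big_ord1 /= (DS 1) (DS 0) D0 expr0 C12 expr1; ring.
Qed.

Lemma Phi_eq n : (1 <= n)%N -> Phi n = D (n + n).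
Proof.
case: n => [//|n] _.
elim: n => [|n IH]; first exact: Phi1.
rewrite Phi_step // IH.
by rewrite (D_step n.+1).
Qed.

Lemma eqm_Xmul M p c a : (M <= a)%N -> eqm M (p * (1 + c * 'X^a)) p.
Proof.
move=> h; exists (p * c * 'X^(a - M)).
have -> : p * (1 + c * 'X^a) - p = p * c * 'X^a by ring.
by rewrite -[in RHS]mulrA -exprD subnK.
Qed.

Lemma eqm_Xmul' M p a : (M <= a)%N -> eqm M (p * (1 - 'X^a)) p.
Proof.
move=> h; have := @eqm_Xmul M p (-1) a h.
by rewrite mulN1r.
Qed.

Lemma D_ext M n k : (M <= n.+1)%N -> eqm M (D (n + k)) (D n).
Proof.
move=> h; elim: k => [|k IH]; first by rewrite addn0; apply: eqm_refl.
have hx : (M <= (n + k).+1)%N by lia.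
rewrite addnS DS; exact: eqm_trans (@eqm_Xmul' M (D (n + k)) _ hx) IH.
Qed.

Lemma XR M a b k : (M <= a + b.+1)%N ->
  eqm M ('X^a * \prod_(j < k) (1 - 'X^((b + j).+1))) ('X^a).
Proof.
move=> h; elim: k => [|k IH]; first by rewrite big_ord0 mulr1; apply: eqm_refl.
rewrite big_ord_recr /= mulrA.
apply: eqm_trans (eqmMr _ IH) _.
have -> : 'X^a * (1 - 'X^((b + k).+1)) = 'X^a - 'X^(a + (b + k).+1) :> {poly int}.
  by rewrite exprD; ring.
have hx : (M <= a + (b + k).+1)%N by lia.
apply: eqm_trans (eqmB (eqm_refl _ _) (eqmX0 hx)) _.
by rewrite subr0; apply: eqm_refl.
Qed.

Lemma unitX_Dn n : unitX (D n). Proof. exact: unitX_D. Qed.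

Lemma step3 M n : (M <= n)%N -> (1 <= n)%N ->
  eqm M (D n ^+ 2) (\sum_(i < n) cc i * Eh n i * E n).
Proof.
move=> hM hn.
apply: (eqm_cancel (u := D (n + n))); first exact: unitX_D.
rewrite -{1}(Phi_eq hn) /Phi mulr_suml mulr_sumr.
apply: eqm_sum => i _.
have hi := ltn_ord i.
have eb : (n - i.+1 + i.+1 = n)%N by lia.
have eD : D n = D (n - i.+1) * \prod_(j < i.+1) (1 - 'X^((n - i.+1 + j).+1)).
  by rewrite -D_add eb.
set R := \prod_(j < i.+1) _ in eD.
have gp : G (n + n) (n - i.+1) * D (n - i.+1) * D (n + i.+1) = D (n + n).
  have -> : (n + i.+1 = n + n - (n - i.+1))%N by lia.
  by apply: G_prod; lia.
have hX : eqm M ('X^('C(i.+1, 2)) * R) ('X^('C(i.+1, 2))).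
  by apply: XR; rewrite binS2; lia.
have hD : eqm M (D n) (D (n + i.+1)).
  by apply: eqm_sym; apply: D_ext; lia.
apply: (eqm_trans (q := cc i * Eh n i * E n * G (n + n) (n - i.+1) * (D n * D (n + i.+1)))).
  by rewrite expr2; apply: eqmMl; apply: eqmMl.
rewrite {1}eD.
apply: (eqm_trans (q := ((-1) ^+ i * (1 - 'X^(i.+1)) ^+ 2 * Eh n i * E n * D (n + n)) *
                      ('X^('C(i.+1, 2)) * R))).
  by apply: eqm_eq; rewrite -gp /cc; ring.
apply: eqm_trans (eqmMl _ hX) _.
by apply: eqm_eq; rewrite /cc; ring.
Qed.

Lemma tele n : \sum_(i < n) (-1) ^+ i * 'X^('C(i.+1, 2)) * (1 + 'X^(i.+1))
   = 1 - (-1) ^+ n * 'X^('C(n.+1, 2)) :> {poly int}.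
Proof.
elim: n => [|n IH]; first by rewrite big_ord0 expr0 C12 expr0; ring.
rewrite (sum_recr (fun i => (-1) ^+ i * 'X^('C(i.+1, 2)) * (1 + 'X^(i.+1)))) IH.
have -> : 'X^('C(n.+2, 2)) = 'X^('C(n.+1, 2)) * 'X^(n.+1) :> {poly int}.
  by rewrite -exprD binS2.
rewrite (exprS (-1)); ring.
Qed.

Lemma step4 n : \sum_(i < n) cc i * Eh n i * E n =
  E n ^+ 2 * (1 - (-1) ^+ n * 'X^('C(n.+1, 2))) +
  4%:R * \sum_(i < n) (-1) ^+ (i.+1) * 'X^('C(i.+2, 2)) * Eh n i * E n.
Proof.
rewrite -tele !mulr_sumr -big_split; apply: eq_bigr => i _.
have hi := ltn_ord i.
rewrite -(EhE hi) /cc.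
have -> : 'X^('C(i.+2, 2)) = 'X^('C(i.+1, 2)) * 'X^(i.+1) :> {poly int}.
  by rewrite -exprD binS2.
rewrite (exprS (-1)) /=; ring.
Qed.

Lemma eqm_Xmul1 M p a : (M <= a)%N -> eqm M (p * (1 + 'X^a)) p.
Proof. by move=> h; have := @eqm_Xmul M p 1 a h; rewrite mul1r. Qed.

Definition RHSc N : {poly int} :=
  E N ^+ 2 + 4%:R * \sum_(i < N) (-1) ^+ (i.+1) * 'X^('C(i.+2, 2)) * Eh N i * E N.

Lemma core N : eqm N.+1 (D N ^+ 2) (RHSc N).
Proof.
have h3 := @step3 N.+1 N.+1 (leqnn _) (ltn0Sn _).
rewrite step4 in h3.
have hD : eqm N.+1 (D N.+1) (D N) by rewrite DS; apply: eqm_Xmul'.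
have hE : eqm N.+1 (E N.+1) (E N) by rewrite ES; apply: eqm_Xmul1.
apply: eqm_trans (eqm_sym (eqmM hD hD)) _.
rewrite -expr2.
apply: eqm_trans h3 _.
rewrite /RHSc; apply: eqmD.
  rewrite -[E N ^+ 2]mulr1; apply: eqmM; first by rewrite !expr2; apply: eqmM.
  have hx : (N.+1 <= 'C(N.+2, 2))%N by rewrite binS2; lia.
  have := @eqm_Xmul N.+1 1 (- (-1) ^+ N.+1) _ hx.
  by rewrite mul1r mulNr.
apply: eqmMl.
rewrite (sum_recr (fun i => (-1) ^+ (i.+1) * 'X^('C(i.+2, 2)) * Eh N.+1 i * E N.+1)).
rewrite -[X in eqm _ _ X]addr0; apply: eqmD.
  apply: eqm_sum => i _.
  have hi : (i : nat) != N by rewrite neq_ltn ltn_ord.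
  apply: eqmM => //; apply: eqmM; first exact: eqm_refl.
  rewrite (EhS hi); apply: eqm_Xmul1; lia.
have hx : (N.+1 <= 'C(N.+2, 2))%N by rewrite binS2; lia.
apply: eqm_trans (eqmMr _ (eqmMr _ (eqmMl _ (eqmX0 hx)))) _.
by apply: eqm_eq; ring.
Qed.

Definition gsum N (A : nat -> bool) (j : nat) : {poly int} :=
  \sum_(t < N.+1 | A t) 'X^(j * t).

Lemma coef_prod N (A : 'I_N -> nat -> bool) e :
  (\prod_(k < N) gsum N (A k) k.+1)`_e =
  (#|[pred f : {ffun 'I_N -> 'I_N.+1} |
      [forall k, A k (f k)] && ((\sum_(k < N) k.+1 * f k)%N == e)]|)%:R.
Proof.
rewrite /gsum.
under eq_bigr do rewrite big_mkcond.
rewrite bigA_distr_bigA /= coef_sum.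
rewrite [RHS](_ : _ = \sum_(f : {ffun 'I_N -> 'I_N.+1})
   (if [forall k, A k (f k)] && ((\sum_(k < N) k.+1 * f k)%N == e) then 1 else 0)); last first.
  by rewrite -big_mkcond sumr_const.
apply: eq_bigr => f _.
case: (boolP [forall k, A k (f k)]) => h /=.
  rewrite (eq_bigr (fun k : 'I_N => 'X^(k.+1 * f k))); last first.
    by move=> k _; move/forallP: h => /(_ k) ->.
  by rewrite prodrXr coefXn eq_sym; case: (_ == _).
move/forallPn: h => [k hk].
rewrite (bigD1 k) //= (negbTE hk) mul0r coef0 //.
Qed.

Lemma gsum_pos N j : (0 < j)%N ->
  eqm N.+1 (gsum N (fun t => 0 < t)%N j) ('X^j * gsum N predT j).
Proof.
move=> hj; rewrite /gsum big_mkcond /=.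
rewrite (sum_recl (fun t => if (0 < t)%N then 'X^(j * t) else 0)) /= add0r.
rewrite mulr_sumr (sum_recr (fun t => 'X^j * 'X^(j * t))).
rewrite -[X in eqm _ X _]addr0; apply: eqmD.
  by apply: eqm_eq; apply: eq_bigr => t _; rewrite -exprD mulnS.
apply: eqm_sym; rewrite -exprD; apply: eqmX0; nia.
Qed.

Lemma gsum_odd_exact j L :
  (1 + 'X^j) * (\sum_(t < L) if odd t then 'X^(j * t) else 0) =
  'X^j * (\sum_(t < L) 'X^(j * t)) - (if odd L then 'X^(j * L) else 0) :> {poly int}.
Proof.
elim: L => [|L IH]; first by rewrite !big_ord0 /=; ring.
rewrite (sum_recr (fun t => if odd t then 'X^(j * t) else 0 : {poly int})).
rewrite (sum_recr (fun t => 'X^(j * t) : {poly int})) /=.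
rewrite mulrDr IH mulnS exprD.
by case: (odd L) => /=; ring.
Qed.

Lemma gsum_odd N j : (0 < j)%N ->
  eqm N.+1 ((1 + 'X^j) * gsum N odd j) ('X^j * gsum N predT j).
Proof.
move=> hj; rewrite /gsum big_mkcond gsum_odd_exact.
rewrite -[X in eqm _ _ X]subr0; apply: eqmB; first exact: eqm_refl.
case: (odd N.+1); last exact: eqm_refl.
apply: eqmX0; nia.
Qed.

Lemma gsum_geo N j : (0 < j)%N -> eqm N.+1 ((1 - 'X^j) * gsum N predT j) 1.
Proof.
move=> hj.
have e : forall L, (1 - 'X^j) * (\sum_(t < L) 'X^(j * t)) = 1 - 'X^(j * L) :> {poly int}.
  elim=> [|L IH]; first by rewrite big_ord0 muln0 expr0; ring.
  rewrite (sum_recr (fun t => 'X^(j * t) : {poly int})) mulrDr IH mulnS exprD; ring.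
rewrite /gsum e -[X in eqm _ _ X]subr0; apply: eqmB; first exact: eqm_refl.
apply: eqmX0; nia.
Qed.

Definition Aq (i k t : nat) : bool :=
  if (k < i)%N then (0 < t)%N else if k == i then odd t else true.
Definition Pp N := \prod_(k < N) gsum N predT k.+1.
Definition Qq N i := \prod_(k < N) gsum N (Aq i k) k.+1.

Lemma gsum_ext N (A1 A2 : nat -> bool) j : A1 =1 A2 -> gsum N A1 j = gsum N A2 j.
Proof. by move=> h; apply: eq_bigl => t; rewrite h. Qed.

Lemma DP N : eqm N.+1 (D N * Pp N) 1.
Proof.
rewrite /D /Pp -big_split /=.
have : eqm N.+1 (\prod_(k < N) ((1 - 'X^(k.+1)) * gsum N predT k.+1))
                (\prod_(k < N) (1 : {poly int})).
  by apply: eqm_prod => k _; apply: gsum_geo.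
by rewrite big1_eq.
Qed.

Lemma tri i : (\sum_(k < i) k.+1)%N = 'C(i.+1, 2).
Proof.
elim: i => [|i IH]; first by rewrite big_ord0.
by rewrite big_ord_recr binS2 -IH.
Qed.

Lemma sumcond N i : (i < N)%N ->
  (\sum_(k < N) (if (k < i.+1)%N then k.+1 else 0))%N = 'C(i.+2, 2).
Proof.
move=> hi; rewrite -big_mkcond /=.
rewrite -(@big_ord_widen nat 0%N addn i.+1 N (fun k => k.+1) hi).
exact: tri.
Qed.

Lemma QP N i : (i < N)%N ->
  eqm N.+1 ((1 + 'X^(i.+1)) * Qq N i) ('X^('C(i.+2, 2)) * Pp N).
Proof.
move=> hi.
have -> : 'X^('C(i.+2, 2)) * Pp N =
    \prod_(k < N) ('X^(if (k < i.+1)%N then k.+1 else 0%N) * gsum N predT k.+1).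
  by rewrite big_split /= prodrXr sumcond.
rewrite /Qq (bigD1 (Ordinal hi)) // [X in eqm _ _ X](bigD1 (Ordinal hi)) //= mulrA.
apply: eqmM.
  rewrite ltnSn (@gsum_ext N (Aq i i) odd); last by move=> t; rewrite /Aq ltnn eqxx.
  by apply: gsum_odd.
apply: eqm_prod => k hk.
have hki : (k : nat) != i by move: hk; apply: contra => /eqP h; apply/eqP/val_inj.
case: (ltngtP k i) => h.
- rewrite (@gsum_ext N (Aq i k) (fun t => 0 < t)%N); last by move=> t; rewrite /Aq h.
  rewrite ltnS ltnW //; exact: gsum_pos.
- rewrite (@gsum_ext N (Aq i k) predT); last by move=> t; rewrite /Aq ltnNge ltnW // (negbTE hki).
  rewrite ltnS leqNgt h expr0 mul1r; exact: eqm_refl.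
- by move: hki; rewrite h eqxx.
Qed.

Lemma W_exact (y : {poly int}) L :
  (1 + y) ^+ 2 * (\sum_(k < L) (-1) ^+ k * k.+1%:R * y ^+ k) =
  1 - (-1) ^+ L * (L.+1%:R * y ^+ L + L%:R * y ^+ L.+1).
Proof.
elim: L => [|L IH]; first by rewrite big_ord0; ring.
rewrite (sum_recr (fun k => (-1) ^+ k * k.+1%:R * y ^+ k)) mulrDr IH.
rewrite !exprS !mulrS; ring.
Qed.

Lemma crank_factor N j : (0 < j)%N ->
  eqm N.+1 ((1 + 'X^j) ^+ 2 * ((1 - 'X^j) *
     \sum_(k < N.+1) (((-1) ^+ k * k.+1%:R) *: 'X^(j * k)))) (1 - 'X^j).
Proof.
move=> hj.
have -> : \sum_(k < N.+1) (((-1) ^+ k * k.+1%:R) *: 'X^(j * k)) =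
          \sum_(k < N.+1) (-1) ^+ k * k.+1%:R * ('X^j) ^+ k :> {poly int}.
  apply: eq_bigr => k _.
  by rewrite -mul_polyC rmorphM rmorphXn rmorphN rmorph1 rmorph_nat exprM.
have -> : (1 + 'X^j) ^+ 2 * ((1 - 'X^j) *
     \sum_(k < N.+1) (-1) ^+ k * k.+1%:R * ('X^j) ^+ k) =
   (1 - 'X^j) * ((1 + 'X^j) ^+ 2 * \sum_(k < N.+1) (-1) ^+ k * k.+1%:R * ('X^j) ^+ k)
   :> {poly int} by ring.
rewrite W_exact.
rewrite -[X in eqm _ _ X]mulr1; apply: eqmMl.
rewrite -[X in eqm _ _ X]subr0; apply: eqmB; first exact: eqm_refl.
rewrite -!exprM.
have h1 : (N.+1 <= j * N.+1)%N by nia.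
have h2 : (N.+1 <= j * N.+2)%N by nia.
apply: eqm_trans (eqmMl _ (eqmD (eqmMl _ (eqmX0 h1)) (eqmMl _ (eqmX0 h2)))) _.
by apply: eqm_eq; ring.
Qed.

Lemma crank_E N : eqm N.+1 (E N ^+ 2 * crank_gf_trunc N) (D N).
Proof.
rewrite /crank_gf_trunc big_add1 /= big_mkord /E -prodrXl -big_split /=.
by apply: eqm_prod => k _; apply: crank_factor.
Qed.

Definition LHSp N := Pp N + \sum_(i < N) ((4 * (-1) ^+ i.+1 : int) *: Qq N i).

Lemma glue N : eqm N.+1 (LHSp N) (crank_gf_trunc N).
Proof.
have uX : unitX (E N ^+ 2 * D N).
  by rewrite expr2; apply: unitXM; [apply: unitXM|]; [apply: unitX_E|apply: unitX_E|apply: unitX_D].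
apply: (eqm_cancel uX).
apply: (eqm_trans (q := RHSc N)); last first.
  apply: eqm_trans (eqm_sym (core N)) _.
  apply: eqm_sym.
  rewrite (_ : E N ^+ 2 * D N * crank_gf_trunc N = D N * (E N ^+ 2 * crank_gf_trunc N)); last by ring.
  rewrite [X in eqm _ _ X]expr2; apply: eqmMl; exact: crank_E.
rewrite /LHSp /RHSc mulrDr; apply: eqmD.
  rewrite -mulrA -[X in eqm _ _ X]mulr1; apply: eqmMl; exact: DP.
rewrite !mulr_sumr; apply: eqm_sum => i _.
have hi := ltn_ord i.
rewrite -mul_polyC rmorphM rmorphXn rmorphN rmorph1 rmorph_nat.
rewrite -(EhE hi).
set y := 'X^(i.+1).
set h := Eh N i.
set s : {poly int} := (-1) ^+ i.+1.
apply: (eqm_trans (q := (4%:R * s * h * ((1 + y) * h) * D N) * ((1 + y) * Qq N i))).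
  by apply: eqm_eq; ring.
apply: eqm_trans (eqmMl _ (QP hi)) _.
apply: (eqm_trans (q := (4%:R * s * h * ((1 + y) * h) * 'X^('C(i.+2, 2))) * (D N * Pp N))).
  by apply: eqm_eq; ring.
apply: eqm_trans (eqmMl _ (DP N)) _.
by apply: eqm_eq; ring.
Qed.

Lemma sum_const_card (T : finType) (P : pred T) (c : int) :
  \sum_(x | P x) c = c * (#|P|)%:R.
Proof.
by rewrite -sum1_card natr_sum mulr_sumr; apply: eq_bigr => x _; rewrite mulr1.
Qed.

Lemma omega_sum n :
  \sum_(m : {ffun 'I_n -> 'I_n.+1} | is_partition m) omega m =
  (#|[pred m : {ffun 'I_n -> 'I_n.+1} | is_partition m]|)%:R +
  \sum_(i < n) (4 * (-1) ^+ i.+1) *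
     (#|[pred m : {ffun 'I_n -> 'I_n.+1} | is_partition m && (in_initial_run m i && odd (m i))]|)%:R.
Proof.
rewrite /omega big_split /= sum_const_card mul1r; congr (_ + _).
rewrite -mulr_sumr.
rewrite (eq_bigr (fun m => \sum_(i < n) (if in_initial_run m i && odd (m i)
                                         then (-1) ^+ i.+1 else 0))); last first.
  by move=> m _; rewrite big_mkcond.
rewrite exchange_big /= mulr_sumr; apply: eq_bigr => i _.
rewrite -big_mkcondr sum_const_card mulrA.
by [].
Qed.

Lemma Aq_run n (m : {ffun 'I_n -> 'I_n.+1}) (i : 'I_n) :
  [forall k : 'I_n, Aq i k (m k)] = in_initial_run m i && odd (m i).
Proof.
apply/idP/idP.
  move/forallP => h; apply/andP; split.
    apply/forallP => k; apply/implyP => hk; rewrite /occurs.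
    have := h k; rewrite /Aq.
    case: (ltngtP k i) hk => // heq _.
    exact: odd_gt0.
  by have := h i; rewrite /Aq ltnn eqxx.
case/andP => /forallP hr ho; apply/forallP => k; rewrite /Aq.
case: (ltngtP k i) => h.
- by have := hr k; rewrite ltnW.
- by rewrite ?gtn_eqF.
- by have -> : k = i by apply: val_inj.
Qed.

Theorem theorem1p6 (n : nat) (hn : (0 < n)%N) :
  MeMo n = \sum_(m : {ffun 'I_n -> 'I_n.+1} | is_partition m) omega m.
Proof.
rewrite /MeMo -(eqm_coef (glue n) (ltnSn n)) omega_sum.
rewrite /LHSp coefD coef_sum /Pp (coef_prod (fun _ => predT)).
congr (_ + _).
  congr (_%:R); apply: eq_card => f; rewrite !inE /is_partition.
  by have -> : [forall k, predT (f k)] by apply/forallP.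
apply: eq_bigr => i _; rewrite coefZ /Qq (coef_prod (fun k => Aq i k)).
congr (_ * _%:R); apply: eq_card => f; rewrite !inE /is_partition Aq_run andbC.
by [].
Qed.
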